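(* For positive integers $m,n$: $\chi_{ei}(F_{m,n})=1$ if $m=1$ and $n=2$; $\chi_{ei}(F_{m,n})=m+1$ if $m\ge 2$ and $n=2$; and $\chi_{ei}(F_{m,n})=m+n$ if either $m=1$ and $n\ge 4$, or $m\ge 2$ and $n\ge 3$.
   Context: All graphs are finite and simple. The fan graph $F_{m,n}$ is the join $\overline{K}_m\vee P_n$ of the edgeless graph on $m$ vertices and the path on $n$ vertices, i.e. the disjoint union of these two graphs together with all edges between them. A path $P_4$ in $G$ is a sequence $uxyv$ of four distinct vertices with $ux,xy,yv\in E(G)$; $u,v$ are its end vertices. An $e$-injective $k$-coloring of $G$ is a function $f:V(G)\to\{1,\dots,k\}$ with $f(u)\ne f(v)$ whenever $u,v$ are the end vertices of some path $P_4$ in $G$; $\chi_{ei}(G)$ is the least such $k$. *)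

(* Defs.v *)
From mathcomp Require Import all_boot.
Set Implicit Arguments. Unset Strict Implicit. Unset Printing Implicit Defensive.

(* Vertex set of the fan F_{m,n}: inl i = the i-th vertex of the edgeless part
   \overline{K}_m, inr j = the j-th vertex of the path P_n (path 0-1-...-(n-1)). *)
Definition fan_vertex (m n : nat) : finType := ('I_m + 'I_n)%type.

Definition fan_adj (m n : nat) : rel (fan_vertex m n) :=
  fun u v =>
    match u, v with
    | inl _, inl _ => false
    | inl _, inr _ => true
    | inr _, inl _ => true
    | inr i, inr j => (i.+1 == j :> nat) || (j.+1 == i :> nat)
    end.

Definition P4_ends (T : finType) (e : rel T) (u v : T) : Prop :=
  exists x y : T, uniq [:: u; x; y; v] /\ e u x /\ e x y /\ e y v.

(* f : T -> {1..k} (modelled as 'I_k) is an e-injective k-coloring. *)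
Definition einj_coloring (T : finType) (e : rel T) (k : nat) (f : T -> 'I_k) : Prop :=
  forall u v : T, P4_ends e u v -> f u <> f v.

Definition has_einj_coloring (T : finType) (e : rel T) (k : nat) : Prop :=
  exists f : T -> 'I_k, einj_coloring e f.

Definition chi_ei_is (T : finType) (e : rel T) (c : nat) : Prop :=
  has_einj_coloring e c /\ (forall k, has_einj_coloring e k -> c <= k).

(* Main.v *)
Require Import Defs.
From mathcomp Require Import all_boot.
From mathcomp Require Import zify.
Set Implicit Arguments. Unset Strict Implicit.

Section S.
Variables m' n' : nat.
Local Notation m := m'.+1.
Local Notation n := n'.+1.
Local Notation T := (fan_vertex m n).
Local Notation e := (@fan_adj m n).

Definition code (u : T) : nat := match u with inl i => val i | inr j => m + val j end.
Lemma code_inj : injective code.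
Proof.
case=> [i|j] [k|l] /= H.
- by congr inl; apply: val_inj.
- by have := ltn_ord i; lia.
- by have := ltn_ord k; lia.
- by have -> : j = l by apply: val_inj => /=; lia.
Qed.

Lemma P4_fan (u x y v : T) : uniq [:: code u; code x; code y; code v] ->
  e u x -> e x y -> e y v -> P4_ends e u v.
Proof.
move=> U h1 h2 h3; exists x, y; split=> //.
by rewrite -(map_inj_uniq code_inj).
Qed.

Definition pv (k : nat) : T := inr (inord k).
Definition av (k : nat) : T := inl (inord k).
Lemma code_pv k : k < n -> code (pv k) = m + k.
Proof. by move=> h; rewrite /= inordK. Qed.
Lemma code_av k : k < m -> code (av k) = k.
Proof. by move=> h; rewrite /= inordK. Qed.
Lemma adj_pp j k : j < n -> k < n -> e (pv j) (pv k) = (j.+1 == k) || (k.+1 == j).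
Proof. by move=> hj hk; rewrite /= !inordK. Qed.
Lemma adj_pi j (l : 'I_n) : j < n -> e (pv j) (inr l) = (j.+1 == l) || (l.+1 == j).
Proof. by move=> hj; rewrite /= !inordK. Qed.
Lemma adj_ip j (l : 'I_n) : j < n -> e (inr l) (pv j) = (l.+1 == j) || (j.+1 == l).
Proof. by move=> hj; rewrite /= !inordK. Qed.

Lemma fan_sym : symmetric e.
Proof. by case=> [i|j] [k|l] //=; rewrite orbC. Qed.

Lemma P4_sym (u v : T) : P4_ends e u v -> P4_ends e v u.
Proof.
case=> x [y [U [h1 [h2 h3]]]]; exists y, x.
split; first by rewrite -rev_uniq.
by rewrite fan_sym h3 fan_sym h2 fan_sym h1.
Qed.

Lemma P4_aa (i k : 'I_m) : 1 < n -> i != k -> P4_ends e (inl i) (inl k).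
Proof.
move=> hn ik; apply: (@P4_fan _ (pv 0) (pv 1)) => //; last by rewrite adj_pp.
rewrite !code_pv //=; move: ik; rewrite -val_eqE /= !inE; have := ltn_ord i; have := ltn_ord k; lia.
Qed.

Lemma P4_ap2 (i : 'I_m) (j : 'I_n) : 1 < m -> 1 < n -> P4_ends e (inl i) (inr j).
Proof.
move=> hm hn; have hi := ltn_ord i; have hj := ltn_ord j.
apply: (@P4_fan _ (pv (if val j == 0 then 1 else 0)) (av (if val i == 0 then 1 else 0))).
- rewrite code_pv ?code_av; try by case: ifP; lia.
  rewrite /= !inE; case: ifP; case: ifP; lia.
- by [].
- by [].
- by [].
Qed.

Lemma P4_ap1 (i : 'I_m) (j : 'I_n) : 3 < n -> P4_ends e (inl i) (inr j).
Proof.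
move=> hn; have hi := ltn_ord i; have hj := ltn_ord j.
case: (ltnP j.+2 n) => hj2.
- apply: (@P4_fan _ (pv j.+2) (pv j.+1)).
  + rewrite !code_pv //; try lia. rewrite /= !inE; lia.
  + by [].
  + rewrite adj_pp; lia.
  + rewrite adj_pi; lia.
- apply: (@P4_fan _ (pv (j - 2)) (pv (j - 1))).
  + rewrite !code_pv //; try lia. rewrite /= !inE; lia.
  + by [].
  + rewrite adj_pp; lia.
  + rewrite adj_pi; lia.
Qed.

Lemma P4_pp (j l : 'I_n) : 2 < n -> j != l -> P4_ends e (inr j) (inr l).
Proof.
move=> hn; rewrite -val_eqE /= => jl; have hj := ltn_ord j; have hl := ltn_ord l.
case: (boolP (((0 < l) && (l.-1 != j)) || ((l.+1 < n) && (l.+1 != j)))) => cA.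
- pose x := if (0 < l) && (l.-1 != j) then l.-1 else l.+1.
  have hx : x < n by rewrite /x; case: ifP; lia.
  apply: (@P4_fan _ (av 0) (pv x)).
  + rewrite code_pv // code_av //= !inE; rewrite /x; case: ifP; lia.
  + by [].
  + by [].
  + rewrite adj_pi //; rewrite /x; case: ifP; lia.
- pose x := if (l == 0 :> nat) then 2 else j.-1.
  have hx : x < n by rewrite /x; case: ifP; lia.
  apply: (@P4_fan _ (pv x) (av 0)).
  + rewrite code_pv // code_av //= !inE; rewrite /x; case: ifP; lia.
  + rewrite fan_sym adj_pi //; rewrite /x; case: ifP; lia.
  + by [].
  + by [].
Qed.

Lemma P4_all (u v : T) : (m = 1 /\ 3 < n) \/ (1 < m /\ 2 < n) -> u != v -> P4_ends e u v.
Proof.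
move=> H; case: u => [i|j]; case: v => [k|l] uv.
- apply: P4_aa; first lia. apply/negP => /eqP ik; by rewrite ik eqxx in uv.
- case: H => [[_ H]|[H1 H2]]; [exact: P4_ap1 | apply: P4_ap2 => //; lia].
- apply: P4_sym; case: H => [[_ H]|[H1 H2]]; [exact: P4_ap1 | apply: P4_ap2 => //; lia].
- apply: P4_pp; first lia. apply/negP => /eqP ik; by rewrite ik eqxx in uv.
Qed.
End S.

Lemma P4_neq (T : finType) (e : rel T) u v : P4_ends e u v -> u != v.
Proof. by case=> x [y [U _]]; move: U; rewrite /= !inE; case/andP => /norP [_ /norP [_ ]]. Qed.

Lemma einj_inj (A T : finType) (e : rel T) k (f : T -> 'I_k) (g : A -> T) :
  (forall a b, a != b -> P4_ends e (g a) (g b)) -> einj_coloring e f -> injective (f \o g).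
Proof.
move=> H hf a b /= fab; apply/eqP; apply/negP => /negP ab.
exact: (hf _ _ (H _ _ ab)).
Qed.

Lemma code_lt m' n' (u : fan_vertex m'.+1 n'.+1) : code u < m'.+1 + n'.+1.
Proof. case: u => [i|j] /=; [have := ltn_ord i | have := ltn_ord j]; lia. Qed.

Lemma noP4_pp2 m' (j l : 'I_2) : ~ P4_ends (@fan_adj m'.+1 2) (inr j) (inr l).
Proof.
case=> x [y [U [h1 [h2 h3]]]]; move: U; rewrite -(map_inj_uniq (@code_inj m' 1)).
have := ltn_ord j; have := ltn_ord l.
case: x h1 h2 h3 => [a|a]; case: y => [b|b] //= _ _ _; rewrite !inE;
  have := ltn_ord a; have := ltn_ord b; lia.
Qed.

Theorem proposition3p8 (m n : nat) : 0 < m -> 0 < n ->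
  (m = 1 -> n = 2 -> chi_ei_is (@fan_adj m n) 1) /\
  (2 <= m -> n = 2 -> chi_ei_is (@fan_adj m n) m.+1) /\
  ((m = 1 /\ 4 <= n) \/ (2 <= m /\ 3 <= n) -> chi_ei_is (@fan_adj m n) (m + n)).
Proof.
case: m => // m' _; case: n => // n' _.
split; [|split].
- move=> [->] [->]; split.
  + exists (fun _ => ord0) => u v [x [y [U _]]].
    have := max_card (mem [:: u; x; y; v]).
    by rewrite (card_uniqP U) card_sum !card_ord.
  + by move=> k [f _]; have := ltn_ord (f (inl ord0)); lia.
- move=> hm [En]; subst n'; split.
  + exists (fun u => match u with inl i => widen_ord (leqnSn _) i | inr _ => ord_max end).
    move=> [i|j] [k|l] P; apply/eqP; have := P4_neq P; rewrite -!val_eqE /=.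
    * by apply: contra => /eqP ik; apply/eqP; congr inl; apply: val_inj.
    * by have := ltn_ord i; lia.
    * by have := ltn_ord k; lia.
    * by case: (noP4_pp2 P).
  + move=> k [f hf].
    pose g (o : option 'I_m'.+1) : fan_vertex m'.+1 2 :=
      if o is Some i then inl i else inr ord0.
    have := leq_card _ (einj_inj (g := g) _ hf).
    rewrite card_option !card_ord; apply.
    move=> [a|] [b|] //= ab.
    * apply: P4_aa => //; by apply: contra ab => /eqP ->.
    * by apply: P4_ap2.
    * by apply: P4_sym; apply: P4_ap2.
- move=> H; split.
  + exists (fun u => Ordinal (code_lt u)) => u v P.
    move=> E; have E' : code u = code v by move: E => /(congr1 val).
    by move: (P4_neq P); rewrite (code_inj E') eqxx.
  + move=> k [f hf].
    have := leq_card _ (einj_inj (g := id) _ hf).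
    rewrite card_sum !card_ord; apply.
    move=> a b ab; apply: P4_all => //; lia.
Qed.
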